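(* Let $V\neq\emptyset$, let $F\colon V\leadsto V$ be an undirected multifunction and let $m,k\in\mathbb{N}$. Then: (i) $F^{\infty\cup}_{\mid m}(w)=\{u\in V\mid \mathrm{Walk}_{u\to w}(F,V\mid m)\neq\emptyset\}$ for every $w\in V$, and $F^{\infty\cup}_{\mid m}$ is undirected, everywhereloop and transitive; (ii) $F^{\infty\cup}_{\mid -m}=F^{\infty-}_{\mid m}=F^{\infty\cup}_{\mid m}$; (iii) $(F^{m\cup})^{\infty\cup}_{\mid k}=F^{\infty\cup}_{\mid k\cdot m}$; (iv) if $k\mid m$ then $F^{\infty\cup}_{\mid m}\subset F^{\infty\cup}_{\mid k}$ and $F^{m\cup}\subset F^{\infty\cup}_{\mid k}$; (v) $F^{m\cup}\subset F^{\infty\cup}_{\mid m}\subset F^{\infty\cup}_{\mid 1}$.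
   Context: Here $\mathbb{N}=\{0,1,2,\dots\}$, $-\mathbb{N}=\{-n\mid n\in\mathbb{N}\}$. A multifunction $F\colon V\leadsto V$ is a map $V\to P(V)$, with inverse $F^{-1}(v)=\{x\mid v\in F(x)\}$; it is undirected if $F=F^{-1}$, everywhereloop if $v\in F(v)$ for all $v$, transitive if $u\in F(v)$ and $v\in F(w)$ imply $u\in F(w)$. Inclusion and union of multifunctions are pointwise. For $A\subset V$: $F_{\cup}(A)=\bigcup_{a\in A}F(a)$, $F_{-}(A)=\{x\mid F(x)\cap A\neq\emptyset\}$. For $n\in\mathbb{Z}$: $F^{0\cup}(v)=\{v\}$, $F^{n\cup}(v)=F_{\cup}(F^{(n-1)\cup}(v))$ for $n>0$, $F^{n\cup}=(F^{-1})^{(-n)\cup}$ for $n<0$; similarly $F^{0-}(v)=\{v\}$, $F^{n-}(v)=F_{-}(F^{(n-1)-}(v))$ for $n>0$, $F^{n-}=(F^{-1})^{(-n)-}$ for $n<0$. For $m\in\mathbb{Z}$: $F^{+\infty\cup}_{\mid m}=\bigcup_{n\in\mathbb{N}}F^{(mn)\cup}$, $F^{-\infty\cup}_{\mid m}=\bigcup_{n\in-\mathbb{N}}F^{(mn)\cup}$, $F^{\infty\cup}_{\mid m}=F^{+\infty\cup}_{\mid m}\cup F^{-\infty\cup}_{\mid m}$, and analogously $F^{\infty-}_{\mid m}=\bigcup_{n\in\mathbb{N}}F^{(mn)-}\cup\bigcup_{n\in-\mathbb{N}}F^{(mn)-}$. $\mathrm{Walk}_{u\to w}(F,V,n)$ is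 the set of words $\alpha_1\cdots\alpha_{n+1}$ over $V$ with $\alpha_1=u$, $\alpha_{n+1}=w$, $\alpha_i\in F(\alpha_{i+1})$ for $1\le i\le n$; and $\mathrm{Walk}_{u\to w}(F,V\mid m)=\bigcup_{n\in\mathbb{N}}\mathrm{Walk}_{u\to w}(F,V,m\cdot n)$. *)

(* Defs.v *)
(* Multifunctions F : V ~> V are encoded as F : V -> V -> Prop,
   where  F v x  means  x \in F(v). *)
From Stdlib Require Import ZArith List Arith.
Import ListNotations.

Definition mfun (V : Type) := V -> V -> Prop.

Definition mf_inv {V} (F : mfun V) : mfun V := fun v x => F x v.

Definition mf_eq {V} (F G : mfun V) : Prop := forall v x, F v x <-> G v x.
Definition mf_sub {V} (F G : mfun V) : Prop := forall v x, F v x -> G v x.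

Definition undirected {V} (F : mfun V) : Prop := mf_eq F (mf_inv F).
Definition everywhereloop {V} (F : mfun V) : Prop := forall v, F v v.
Definition mf_transitive {V} (F : mfun V) : Prop :=
  forall u v w, F v u -> F w v -> F w u.

Definition img_cup {V} (F : mfun V) (A : V -> Prop) : V -> Prop :=
  fun x => exists a, A a /\ F a x.
Definition img_minus {V} (F : mfun V) (A : V -> Prop) : V -> Prop :=
  fun x => exists y, F x y /\ A y.

Fixpoint pow_cup_nat {V} (F : mfun V) (n : nat) : mfun V :=
  match n with
  | O => fun v x => x = v
  | S n' => fun v => img_cup F (pow_cup_nat F n' v)
  end.
Fixpoint pow_minus_nat {V} (F : mfun V) (n : nat) : mfun V :=
  match n with
  | O => fun v x => x = v
  | S n' => fun v => img_minus F (pow_minus_nat F n' v)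
  end.

Definition pow_cup {V} (F : mfun V) (n : Z) : mfun V :=
  if (0 <=? n)%Z then pow_cup_nat F (Z.to_nat n)
  else pow_cup_nat (mf_inv F) (Z.to_nat (- n)).
Definition pow_minus {V} (F : mfun V) (n : Z) : mfun V :=
  if (0 <=? n)%Z then pow_minus_nat F (Z.to_nat n)
  else pow_minus_nat (mf_inv F) (Z.to_nat (- n)).

Definition inf_cup {V} (F : mfun V) (m : Z) : mfun V :=
  fun v x => exists n : nat,
    pow_cup F (m * Z.of_nat n) v x \/ pow_cup F (m * (- Z.of_nat n)) v x.
Definition inf_minus {V} (F : mfun V) (m : Z) : mfun V :=
  fun v x => exists n : nat,
    pow_minus F (m * Z.of_nat n) v x \/ pow_minus F (m * (- Z.of_nat n)) v x.

(* Walk_{u -> w}(F, V, n): words a_1 ... a_{n+1} (lists of length n+1,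
   0-indexed here) with a_1 = u, a_{n+1} = w, a_i \in F(a_{i+1}). *)
Definition is_walk {V} (F : mfun V) (u w : V) (n : nat) (l : list V) : Prop :=
  length l = S n /\ nth 0 l u = u /\ nth n l u = w /\
  forall i, i < n -> F (nth (S i) l u) (nth i l u).

Definition is_walk_mod {V} (F : mfun V) (u w : V) (m : nat) (l : list V) : Prop :=
  exists n : nat, is_walk F u w (m * n) l.

(* Main.v *)
Require Import Defs.
From Stdlib Require Import ZArith List Arith Lia.
Import ListNotations.

Section S.
Context {V : Type} (F : mfun V).
Notation R := (pow_cup_nat F).

Lemma R_comp a b : forall w v u, R a w v -> R b v u -> R (a + b) w u.
Proof.
  induction b; intros w v u H1 H2; simpl in *.
  - subst. rewrite Nat.add_0_r. exact H1.
  - rewrite Nat.add_succ_r. simpl. destruct H2 as [c [Hc Hf]].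
    exists c. split; [eapply IHb; eauto | exact Hf].
Qed.

Lemma R_dec a b : forall w u, R (a + b) w u -> exists v, R a w v /\ R b v u.
Proof.
  induction b; intros w u H.
  - rewrite Nat.add_0_r in H. exists u. split; simpl; auto.
  - rewrite Nat.add_succ_r in H. simpl in H. destruct H as [c [Hc Hf]].
    destruct (IHb _ _ Hc) as [v [H1 H2]]. exists v. split; auto. simpl. exists c; auto.
Qed.

Lemma R_left n v x : R (S n) v x <-> exists a, F v a /\ R n a x.
Proof.
  replace (S n) with (1 + n) by lia. split.
  - intros H. destruct (R_dec 1 n _ _ H) as [a [H1 H2]].
    simpl in H1. destruct H1 as [b [Hb Hf]]. subst. eauto.
  - intros [a [H1 H2]]. apply R_comp with a; auto. simpl. exists v; auto.
Qed.

Hypothesis HF : undirected F.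

Lemma HFs v x : F v x -> F x v.
Proof. intros H. apply (proj1 (HF v x)). exact H. Qed.

Lemma R_sym n : forall v x, R n v x -> R n x v.
Proof.
  induction n; intros v x H; simpl in *.
  - auto.
  - destruct H as [a [Ha Hf]]. apply R_left. exists a. split; auto. apply HFs; auto.
Qed.

Lemma inv_eq n : forall v x, pow_cup_nat (mf_inv F) n v x <-> R n v x.
Proof.
  induction n; intros v x; simpl; [tauto|].
  unfold img_cup, mf_inv. split; intros [a [H1 H2]]; exists a; split;
    try (apply IHn; auto); apply HFs; auto.
Qed.

Lemma minus_eq n : forall v x, pow_minus_nat F n v x <-> R n v x.
Proof.
  induction n; intros v x; simpl; [tauto|].
  unfold img_cup, img_minus. split; intros [a [H1 H2]]; exists a; split;
    try (apply IHn; auto); apply HFs; auto.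
Qed.

Lemma minus_inv_eq n : forall v x, pow_minus_nat (mf_inv F) n v x <-> R n v x.
Proof.
  induction n; intros v x; simpl; [tauto|].
  unfold img_cup, img_minus, mf_inv. split; intros [a [H1 H2]]; exists a; split;
    try (apply IHn; auto); auto.
Qed.

Lemma pow_cup_abs z v x : pow_cup F z v x <-> R (Z.abs_nat z) v x.
Proof.
  unfold pow_cup. destruct z; simpl; try tauto. apply inv_eq.
Qed.

Lemma pow_minus_abs z v x : pow_minus F z v x <-> R (Z.abs_nat z) v x.
Proof.
  unfold pow_minus. destruct z; simpl; [tauto|apply minus_eq|apply minus_inv_eq].
Qed.

Lemma abs1 z n : Z.abs_nat (z * Z.of_nat n) = (Z.abs_nat z * n)%nat.
Proof. apply Nat2Z.inj. rewrite Nat2Z.inj_mul, !Nat2Z.inj_abs_nat, Z.abs_mul. lia. Qed.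
Lemma abs2 z n : Z.abs_nat (z * - Z.of_nat n) = (Z.abs_nat z * n)%nat.
Proof. apply Nat2Z.inj. rewrite Nat2Z.inj_mul, !Nat2Z.inj_abs_nat, Z.abs_mul, Z.abs_opp. lia. Qed.

Lemma inf_cup_iff z v x : inf_cup F z v x <-> exists n, R (Z.abs_nat z * n) v x.
Proof.
  unfold inf_cup. split.
  - intros [n [H|H]]; exists n; [rewrite pow_cup_abs, abs1 in H | rewrite pow_cup_abs, abs2 in H]; auto.
  - intros [n H]. exists n. left. rewrite pow_cup_abs, abs1. auto.
Qed.

Lemma inf_minus_iff z v x : inf_minus F z v x <-> exists n, R (Z.abs_nat z * n) v x.
Proof.
  unfold inf_minus. split.
  - intros [n [H|H]]; exists n; [rewrite pow_minus_abs, abs1 in H | rewrite pow_minus_abs, abs2 in H]; auto.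
  - intros [n H]. exists n. left. rewrite pow_minus_abs, abs1. auto.
Qed.

Lemma walk_iff n : forall w u, R n w u <-> exists l, is_walk F u w n l.
Proof.
  induction n; intros w u.
  - simpl. split.
    + intros ->. exists [w]. unfold is_walk; simpl. repeat split; auto. intros; lia.
    + intros [l [Hl [H0 [Hn _]]]]. congruence.
  - simpl. split.
    + intros [a [Ha Hf]]. destruct (proj1 (IHn w a) Ha) as [l [Hl [H0 [Hn Hs]]]].
      exists (u :: l). unfold is_walk. simpl. rewrite Hl. repeat split; auto.
      * rewrite (nth_indep l u a) by lia. auto.
      * intros i Hi. destruct i.
        -- destruct l; simpl in *; [discriminate|]. subst. auto.
        -- rewrite (nth_indep l u a) by lia. rewrite (nth_indep l u a) by lia.
           apply Hs. lia.
    + intros [l [Hl [H0 [Hn Hs]]]]. destruct l as [|u0 l]; [discriminate|].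
      simpl in *. subst u0. injection Hl as Hl.
      destruct l as [|a l]; [simpl in Hl; discriminate|].
      exists a. split.
      * apply IHn. exists (a :: l). unfold is_walk. repeat split; auto.
        -- rewrite (nth_indep (a :: l) a u) by (simpl in *; lia). auto.
        -- intros i Hi. rewrite (nth_indep (a :: l) a u) by (simpl in *; lia).
           rewrite (nth_indep (a :: l) a u) by (simpl in *; lia).
           apply (Hs (S i)). lia.
      * apply (Hs 0). lia.
Qed.

End S.

Lemma R_ext {V} (F G : mfun V) : mf_eq F G -> forall n v x, pow_cup_nat F n v x <-> pow_cup_nat G n v x.
Proof.
  intros H n; induction n; intros v x; simpl; [tauto|].
  unfold img_cup. split; intros [a [H1 H2]]; exists a; split;
   try (apply IHn; auto); apply H; auto.
Qed.

Lemma R_pow {V} (F : mfun V) m j : forall v x,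
  pow_cup_nat (pow_cup_nat F m) j v x <-> pow_cup_nat F (m * j) v x.
Proof.
  induction j; intros v x.
  - rewrite Nat.mul_0_r. simpl. tauto.
  - replace (m * S j) with (m * j + m) by lia. simpl. unfold img_cup. split.
    + intros [a [H1 H2]]. apply R_comp with a; auto. apply IHj; auto.
    + intros H. destruct (R_dec F _ _ _ _ H) as [a [H1 H2]]. exists a. split; auto.
      apply IHj; auto.
Qed.

Lemma absopp z : Z.abs_nat (- z) = Z.abs_nat z.
Proof. destruct z; reflexivity. Qed.

Theorem lemma4p11 (V : Type) (HV : inhabited V) (F : mfun V)
  (HF : undirected F) (m k : nat) :
  (* (i) *)
  ((forall w u, inf_cup F (Z.of_nat m) w u <-> exists l, is_walk_mod F u w m l) /\
   undirected (inf_cup F (Z.of_nat m)) /\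
   everywhereloop (inf_cup F (Z.of_nat m)) /\
   mf_transitive (inf_cup F (Z.of_nat m))) /\
  (* (ii) *)
  (mf_eq (inf_cup F (- Z.of_nat m)) (inf_cup F (Z.of_nat m)) /\
   mf_eq (inf_minus F (Z.of_nat m)) (inf_cup F (Z.of_nat m))) /\
  (* (iii) *)
  mf_eq (inf_cup (pow_cup F (Z.of_nat m)) (Z.of_nat k))
        (inf_cup F (Z.of_nat (k * m))) /\
  (* (iv) *)
  (Nat.divide k m ->
     mf_sub (inf_cup F (Z.of_nat m)) (inf_cup F (Z.of_nat k)) /\
     mf_sub (pow_cup F (Z.of_nat m)) (inf_cup F (Z.of_nat k))) /\
  (* (v) *)
  (mf_sub (pow_cup F (Z.of_nat m)) (inf_cup F (Z.of_nat m)) /\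
   mf_sub (inf_cup F (Z.of_nat m)) (inf_cup F 1%Z)).
Proof.
  assert (Hi : forall z v x, inf_cup F z v x <-> exists n, pow_cup_nat F (Z.abs_nat z * n) v x)
    by (intros; apply inf_cup_iff; auto).
  assert (Hp : forall z v x, pow_cup F z v x <-> pow_cup_nat F (Z.abs_nat z) v x)
    by (intros; apply pow_cup_abs; auto).
  pose proof (Zabs2Nat.id m) as Em.
  pose proof (Zabs2Nat.id k) as Ek.
  unfold mf_eq, mf_sub, undirected, everywhereloop, mf_transitive, mf_inv.
  split; [|split; [|split; [|split]]].
  - split; [|split; [|split]].
    + intros w u. rewrite Hi, Em. unfold is_walk_mod. split.
      * intros [n H]. apply walk_iff in H; auto. destruct H as [l H]. eauto.
      * intros [l [n H]]. exists n. apply walk_iff; eauto.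
    + intros v x. rewrite !Hi. split; intros [n H]; exists n; apply R_sym; auto.
    + intros v. apply Hi. exists 0. rewrite Nat.mul_0_r. reflexivity.
    + intros u v w H1 H2. rewrite Hi in *. destruct H1 as [n1 H1], H2 as [n2 H2].
      exists (n2 + n1). rewrite Nat.mul_add_distr_l. eapply R_comp; eauto.
  - split; intros v x.
    + rewrite !Hi, absopp. tauto.
    + rewrite inf_minus_iff, Hi by auto. tauto.
  - intros v x.
    assert (HG : undirected (pow_cup F (Z.of_nat m))).
    { intros a b. unfold mf_inv. rewrite !Hp. split; apply R_sym; auto. }
    rewrite (inf_cup_iff _ HG), Hi, Ek, Zabs2Nat.id. split; intros [n H]; exists n.
    + apply (R_ext _ _ (fun a b => Hp _ a b)) in H. rewrite Em, R_pow in H.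
      replace (k * m * n) with (m * (k * n)) by lia. auto.
    + apply (R_ext _ _ (fun a b => Hp _ a b)). rewrite Em, R_pow.
      replace (m * (k * n)) with (k * m * n) by lia. auto.
  - intros [c Hc]. split; intros v x; rewrite ?Hi, ?Hp, Em, Ek.
    + intros [n H]. exists (c * n). replace (k * (c * n)) with (m * n) by (subst; lia). auto.
    + intros H. exists c. replace (k * c) with m by (subst; lia). auto.
  - split; intros v x; rewrite ?Hi, ?Hp, Em.
    + intros H. exists 1. rewrite Nat.mul_1_r. auto.
    + intros [n H]. exists (m * n). simpl Z.abs_nat. rewrite Nat.mul_1_l. auto.
Qed.
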